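(* Let $G$ be a finite simple graph of order $n\ge 4$ without isolated vertices and with maximum degree $\Delta(G)=n-3$. Fix a vertex $v$ with $\deg(v)=\Delta(G)$. (i) If $G$ is disconnected, then $\gamma_t(G)=4$ and $TDV(v)=n-3$. (ii) If $G$ is connected, then either $\gamma_t(G)=2$ and $TDV(v)\le n-3$, or $\gamma_t(G)=3$ and $TDV(v)\le \left(\frac{n-3}{2}\right)^2+2(n-4)$.
   Context: A set $D \subseteq V(G)$ is a total dominating set of $G$ if every vertex of $G$ has a neighbor in $D$. $\gamma_t(G)$ is the minimum cardinality of a total dominating set; a minimum one is a $\gamma_t(G)$-set. $TDV(v)$ is the number of $\gamma_t(G)$-sets containing $v$. *)

(* Defs.v *)
From mathcomp Require Import all_boot.
Set Implicit Arguments. Unset Strict Implicit. Unset Printing Implicit Defensive.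

Definition simple_graph (T : finType) (e : rel T) : Prop :=
  symmetric e /\ irreflexive e.

Definition nbhd (T : finType) (e : rel T) (v : T) : {set T} := [set u | e v u].
Definition deg (T : finType) (e : rel T) (v : T) : nat := #|nbhd e v|.
Definition max_deg (T : finType) (e : rel T) : nat := \max_(u : T) deg e u.
Definition no_isolated (T : finType) (e : rel T) : Prop := forall v : T, 0 < deg e v.
Definition connected_graph (T : finType) (e : rel T) : Prop :=
  forall x y : T, connect e x y.

Definition total_dom (T : finType) (e : rel T) (D : {set T}) : bool :=
  [forall x, exists y, (y \in D) && e x y].

(* total domination number: minimum cardinality of a total dominating set
   (defaults to #|T| if none exists, irrelevant without isolated vertices) *)
Definition gamma_t (T : finType) (e : rel T) : nat :=
  \big[minn/#|T|]_(D : {set T} | total_dom e D) #|D|.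

Definition gamma_t_set (T : finType) (e : rel T) (D : {set T}) : bool :=
  total_dom e D && (#|D| == gamma_t e).

Definition TDV (T : finType) (e : rel T) (v : T) : nat :=
  #|[set D : {set T} | gamma_t_set e D && (v \in D)]|.

(* Main.v *)
Require Import Defs.
From mathcomp Require Import all_boot zify.
Set Implicit Arguments. Unset Strict Implicit. Unset Printing Implicit Defensive.

Record Setup (T : finType) (e : rel T) (v a b : T) : Prop := {
  s_sym : symmetric e; s_irr : irreflexive e; s_ab : a != b;
  s_av : a != v; s_bv : b != v; s_va : ~~ e v a; s_vb : ~~ e v b;
  s_cls : forall x, [\/ x = v, x = a, x = b | e v x];
  s_iso : forall x, exists y, e x y }.

Lemma Setup_swap (T : finType) e (v a b : T) : Setup e v a b -> Setup e v b a.
Proof.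
case=> sy ir ab av bv va vb cl iso; constructor=> //; first by rewrite eq_sym.
move=> x; case: (cl x)=> [h|h|h|h]; [exact: Or41|exact: Or43|exact: Or42|exact: Or44].
Qed.

Lemma tdP (T : finType) (e : rel T) (D : {set T}) :
  reflect (forall x, exists2 y, y \in D & e x y) (total_dom e D).
Proof.
apply: (iffP forallP)=> H x.
  by case/existsP: (H x)=> y /andP[]; exists y.
by case: (H x)=> y yD exy; apply/existsP; exists y; rewrite yD.
Qed.

Lemma gt_le (T : finType) (e : rel T) (D : {set T}) : total_dom e D -> gamma_t e <= #|D|.
Proof.
move=> tD; rewrite /gamma_t.
have : D \in index_enum {set T} by rewrite mem_index_enum.
elim: (index_enum _) => // x r IH; rewrite inE big_cons.
case/orP=> [/eqP <-|Dr]; first by rewrite tD geq_minl.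
case: (total_dom e x) => //; first by rewrite geq_min IH // orbT.
exact: IH.
Qed.

Lemma gt_ge (T : finType) (e : rel T) m :
  (forall D, total_dom e D -> m <= #|D|) -> m <= #|T| -> m <= gamma_t e.
Proof.
move=> H mT; rewrite /gamma_t; apply: (big_ind (fun x => m <= x)) => //.
  by move=> x y; rewrite leq_min => -> ->.
Qed.

Lemma cards3 (T : finType) (x y z : T) : x != y -> x != z -> y != z -> #|[set x; y; z]| = 3.
Proof.
move=> xy xz yz; rewrite -setUA cardsU1 cards2 yz !inE negb_or xy xz.
by [].
Qed.

Lemma cards4 (T : finType) (x y z w : T) : x != y -> x != z -> x != w -> y != z -> y != w -> z != w ->
  #|[set x; y; z; w]| = 4.
Proof.
move=> xy xz xw yz yw zw; rewrite -!setUA cardsU1 cardsU1 cards2 zw !inE !negb_or xy xz xw yz yw.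
by [].
Qed.

Lemma gt_ge2 (T : finType) (e : rel T) (v : T) : irreflexive e ->
  forall D, total_dom e D -> 2 <= #|D|.
Proof.
move=> ir D /tdP H; case: (H v)=> y yD _; case: (H y)=> z zD eyz.
have yz : y != z by apply: contraTneq eyz => ->; rewrite ir.
have <- : #|[set y; z]| = 2 by rewrite cards2 yz.
apply: subset_leq_card; apply/subsetP=> u.
by rewrite !inE => /orP[]/eqP->.
Qed.

Lemma conn_of (T : finType) (e : rel T) (v a b w : T) :
  Setup e v a b -> e w a -> e v w -> connected_graph e.
Proof.
move=> S wa vw.
have csym := sym_connect_sym (s_sym S).
have va : connect e v a by apply: connect_trans (connect1 vw) (connect1 wa).
have vx : forall x, connect e v x.
  move=> x; case: (s_cls S x)=> [->|->|->|/connect1 //]; first exact: connect0.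
    exact: va.
  case: (s_iso S b)=> y eby; rewrite csym.
  case: (s_cls S y)=> [yv|ya|yb|vy].
  - by move: (s_vb S); rewrite (s_sym S) -yv eby.
  - by apply: connect_trans (connect1 eby) _; rewrite ya csym.
  - by move: eby; rewrite yb (s_irr S).
  - by apply: connect_trans (connect1 eby) _; rewrite csym; exact: connect1.
by move=> x y; apply: connect_trans (vx y); rewrite csym.
Qed.


Lemma ne_of_e (T : finType) (e : rel T) x y : irreflexive e -> e x y -> x != y.
Proof. by move=> ir; apply: contraTneq => ->; rewrite ir. Qed.

Lemma ne_of_e2 (T : finType) (e : rel T) x y z : e x y -> ~~ e x z -> y != z.
Proof. by move=> h; apply: contraNneq => <-. Qed.

Lemma disc_case (T : finType) (e : rel T) (v a b : T) :
  Setup e v a b -> ~ connected_graph e ->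
  gamma_t e = 4 /\ TDV e v = #|nbhd e v|.
Proof.
move=> S nc; have sy := s_sym S; have ir := s_irr S.
have nA : forall w, e v w -> ~~ e w a.
  by move=> w vw; apply/negP=> wa; apply: nc; exact: conn_of S wa vw.
have nB : forall w, e v w -> ~~ e w b.
  by move=> w vw; apply/negP=> wb; apply: nc; exact: conn_of (Setup_swap S) wb vw.
have onlyb : forall y, e a y -> y = b.
  move=> y ay; case: (s_cls S y)=> [yv|ya|yb|vy] //.
  - by move: (s_va S); rewrite sy -yv ay.
  - by move: ay; rewrite ya ir.
  - by move: (nA y vy); rewrite sy ay.
have onlya : forall y, e b y -> y = a.
  move=> y ay; case: (s_cls S y)=> [yv|ya|yb|vy] //.
  - by move: (s_vb S); rewrite sy -yv ay.
  - by move: ay; rewrite yb ir.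
  - by move: (nB y vy); rewrite sy ay.
have ab : e a b by case: (s_iso S a)=> y ay; rewrite -(onlyb y ay).
have ba : e b a by rewrite sy.
have abD : forall D, total_dom e D -> (a \in D) && (b \in D).
  move=> D /tdP H; case: (H a)=> y yD /onlyb yb; case: (H b)=> z zD /onlya za.
  by rewrite -yb -za yD zD.
have va := s_va S; have vb := s_vb S.
have ab' := s_ab S; have av := s_av S; have bv := s_bv S.
have lo : forall D, total_dom e D -> 4 <= #|D|.
  move=> D tD; case/andP: (abD D tD)=> aD bD; move/tdP: tD=> H.
  case: (H v)=> w wD vw; case: (H w)=> z zD wz.
  have aw : a != w by rewrite eq_sym (ne_of_e2 vw va).
  have bw : b != w by rewrite eq_sym (ne_of_e2 vw vb).
  have az : a != z by rewrite eq_sym (ne_of_e2 wz (nA w vw)).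
  have bz : b != z by rewrite eq_sym (ne_of_e2 wz (nB w vw)).
  rewrite -(cards4 ab' aw az bw bz (ne_of_e ir wz)); apply: subset_leq_card.
  by apply/subsetP=> u; rewrite !inE => /orP[/orP[/orP[]|]|] /eqP->.
have [w0 vw0] := s_iso S v.
have tdf : forall w, e v w -> total_dom e [set v; w; a; b].
  move=> w vw; apply/tdP=> x; case: (s_cls S x)=> [->|->|->|vx].
  - by exists w; rewrite // !inE eqxx !orbT.
  - by exists b; rewrite // !inE eqxx !orbT.
  - by exists a; rewrite // !inE eqxx !orbT.
  - by exists v; [rewrite !inE eqxx | rewrite sy].
have cf : forall w, e v w -> #|[set v; w; a; b]| = 4.
  move=> w vw; apply: cards4 => //; try by rewrite eq_sym.
  - exact: ne_of_e vw.
  - exact: (ne_of_e2 vw va).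
  - exact: (ne_of_e2 vw vb).
have g4 : gamma_t e = 4.
  apply/eqP; rewrite eqn_leq; apply/andP; split.
    by rewrite -(cf w0 vw0); apply: gt_le; apply: tdf.
  apply: gt_ge => //; rewrite -(cf w0 vw0); exact: max_card.
split=> //; rewrite /TDV.
have -> : [set D | gamma_t_set e D & v \in D] =
          (fun w => [set v; w; a; b]) @: nbhd e v.
  apply/setP=> D; rewrite !inE /gamma_t_set g4; apply/idP/idP.
    case/andP=> /andP[tD /eqP cD] vD; case/andP: (abD D tD)=> aD bD.
    move/tdP: (tD)=> H; case: (H v)=> w wD vw.
    apply/imsetP; exists w; first by rewrite inE.
    apply/eqP; rewrite eq_sym eqEcard cD cf // leqnn andbT.
    by apply/subsetP=> u; rewrite !inE => /orP[/orP[/orP[]|]|] /eqP->.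
  case/imsetP=> w; rewrite inE => vw ->.
  rewrite (tdf w vw) (cf w vw) !inE /=.
  by apply/orP; left; apply/orP; left; apply/orP; left.
rewrite card_in_imset // => w1 w2; rewrite !inE => v1 v2 E.
have : w1 \in [set v; w2; a; b] by rewrite -E !inE eqxx !orbT.
rewrite !inE => /orP[/orP[/orP[]|]|] /eqP // E1.
- by move: v1; rewrite E1 ir.
- by move: va; rewrite -E1 v1.
- by move: vb; rewrite -E1 v1.
Qed.


Lemma arith4 (t x y k : nat) : t <= x*y + x + y -> x + y <= k -> 2 <= k ->
  4 * t <= k ^ 2 + 8 * (k - 1).
Proof. move=> h1 h2 h3. have h4 : 4 * (x * y) <= (x+y)^2.
  rewrite expnS expn1. have : 0 <= (x - y) * (x - y) by []. nia.
have h5 : (x+y)^2 <= k^2 by rewrite leq_exp2r.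
lia. Qed.

Lemma two_eq (T : finType) (S : {set T}) p q :
  #|S| = 2 -> p \in S -> q \in S -> p != q -> S = [set p; q].
Proof.
move=> cS pS qS pq; apply/eqP; rewrite eq_sym eqEcard cS cards2 pq leqnn andbT.
by apply/subsetP=> u; rewrite !inE => /orP[]/eqP->.
Qed.

Lemma card3_le (T : finType) (x y z : T) : #|[set x; y; z]| <= 3.
Proof. by rewrite -setUA cardsU1 cards2; case: (_ \notin _); case: (y != z). Qed.

Lemma onlyb_of (T : finType) (e : rel T) (v a b : T) : Setup e v a b ->
  (forall w, e v w -> ~~ e w a) -> forall y, e a y -> y = b.
Proof.
move=> S nA y ay; have sy := s_sym S.
case: (s_cls S y)=> [yv|ya|yb|vy] //.
- by move: (s_va S); rewrite sy -yv ay.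
- by move: ay; rewrite ya (s_irr S).
- by move: (nA y vy); rewrite sy ay.
Qed.

Lemma exA (T : finType) (e : rel T) (v a : T) :
  (exists w, e v w && e w a) \/ (forall w, e v w -> ~~ e w a).
Proof.
case: (pickP (fun w => e v w && e w a)) => [w h|h]; first by left; exists w.
by right=> w vw; move: (h w); rewrite vw /= => ->.
Qed.

Lemma memS3 (T : finType) (x y z : T) : [/\ x \in [set x; y; z], y \in [set x; y; z] & z \in [set x; y; z]].
Proof. by rewrite !inE !eqxx /= !orbT. Qed.

Lemma gt_le3 (T : finType) (e : rel T) (v a b : T) :
  Setup e v a b -> connected_graph e ->
  [/\ gamma_t e <= 3, exists2 w, e v w & (e w a || e w b) & 2 <= gamma_t e].
Proof.
move=> S con; have sy := s_sym S; have ir := s_irr S.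
have g2 : 2 <= gamma_t e.
  apply: gt_ge; first exact: (gt_ge2 v ir).
  have <- : #|[set v; a]| = 2 by rewrite cards2 eq_sym (s_av S).
  exact: max_card.
case: (exA e v a) => [[wa /andP[vwa waa]]|nA];
  case: (exA e v b) => [[wb /andP[vwb wbb]]|nB].
- split=> //; last by exists wa; rewrite // waa.
  apply: leq_trans (gt_le (D := [set v; wa; wb]) _) (card3_le _ _ _).
  case: (memS3 v wa wb) => m1 m2 m3.
  apply/tdP=> x; case: (s_cls S x)=> [->|->|->|vx].
  + by exists wa.
  + by exists wa; rewrite // sy.
  + by exists wb; rewrite // sy.
  + by exists v; rewrite // sy.
- have ob := onlyb_of (Setup_swap S) nB.
  split=> //; last by exists wa; rewrite // waa.
  apply: leq_trans (gt_le (D := [set v; wa; a]) _) (card3_le _ _ _).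
  case: (memS3 v wa a) => m1 m2 m3.
  have ba : e b a by case: (s_iso S b)=> y by_; rewrite -(ob y by_).
  apply/tdP=> x; case: (s_cls S x)=> [->|->|->|vx].
  + by exists wa.
  + by exists wa; rewrite // sy.
  + by exists a.
  + by exists v; rewrite // sy.
- have oa := onlyb_of S nA.
  split=> //; last by exists wb; rewrite // wbb orbT.
  apply: leq_trans (gt_le (D := [set v; wb; b]) _) (card3_le _ _ _).
  case: (memS3 v wb b) => m1 m2 m3.
  have ab : e a b by case: (s_iso S a)=> y ay; rewrite -(oa y ay).
  apply/tdP=> x; case: (s_cls S x)=> [->|->|->|vx].
  + by exists wb.
  + by exists b.
  + by exists wb; rewrite // sy.
  + by exists v; rewrite // sy.
- exfalso.
  have oa := onlyb_of S nA; have ob := onlyb_of (Setup_swap S) nB.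
  have cl : closed e [set a; b].
    have H : forall x y, e x y -> x \in [set a; b] -> y \in [set a; b].
      move=> x y xy; rewrite !inE => /orP[]/eqP xe; move: xy; rewrite xe.
        by move/oa ->; rewrite eqxx orbT.
      by move/ob ->; rewrite eqxx.
    move=> x y xy; apply/idP/idP; first exact: H.
    by apply: H; rewrite sy.
  have := closed_connect cl (con v a).
  rewrite !inE eqxx /= eq_sym (negbTE (s_av S)) eq_sym (negbTE (s_bv S)).
  by [].
Qed.

Lemma con_case (T : finType) (e : rel T) (v a b : T) (k : nat) :
  Setup e v a b -> connected_graph e -> #|nbhd e v| = k ->
  (forall u, deg e u <= k) ->
  (gamma_t e = 2 /\ TDV e v <= k) \/
  (gamma_t e = 3 /\ 4 * TDV e v <= k ^ 2 + 8 * (k - 1)).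
Proof.
move=> S con Nk dk; have sy := s_sym S; have ir := s_irr S.
have va := s_va S; have vb := s_vb S.
case: (gt_le3 S con) => g3 [w vw wab] g2.
have k2 : 2 <= k.
  apply: leq_trans (dk w); rewrite /deg.
  case/orP: wab => wc.
    have <- : #|[set v; a]| = 2 by rewrite cards2 eq_sym (s_av S).
    apply: subset_leq_card; apply/subsetP=> u; rewrite !inE.
    by case/orP=> /eqP->; rewrite // sy.
  have <- : #|[set v; b]| = 2 by rewrite cards2 eq_sym (s_bv S).
  apply: subset_leq_card; apply/subsetP=> u; rewrite !inE.
  by case/orP=> /eqP->; rewrite // sy.
have [g|g] : gamma_t e = 2 \/ gamma_t e = 3 by lia.
- left; split=> //; rewrite /TDV.
  apply: leq_trans (subset_leq_card (B := (fun u => [set v; u]) @: nbhd e v) _) _;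
    last by rewrite -Nk leq_imset_card.
  apply/subsetP=> D; rewrite !inE /gamma_t_set g => /andP[/andP[tD /eqP cD] vD].
  have c1 : #|D :\ v| = 1 by move: cD; rewrite (cardsD1 v) vD add1n => -[].
  have /cards1P[u Du] : #|D :\ v| == 1 by rewrite c1.
  have DE : D = v |: [set u] by rewrite -Du setD1K.
  move/tdP: tD => H; case: (H v) => y; rewrite DE !inE => /orP[]/eqP ->.
    by rewrite ir.
  by move=> vu; apply/imsetP; exists u; rewrite ?inE.
right; split=> //.
have dis : forall w, e v w -> e w a -> e w b -> False.
  move=> z vz za zb.
  have : gamma_t e <= #|[set v; z]|.
    apply: gt_le; apply/tdP=> x; case: (s_cls S x)=> [->|->|->|vx].
    + by exists z; rewrite // !inE eqxx orbT.
    + by exists z; [rewrite !inE eqxx orbT | rewrite sy].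
    + by exists z; [rewrite !inE eqxx orbT | rewrite sy].
    + by exists v; [rewrite !inE eqxx | rewrite sy].
  by rewrite g cards2; case: (v != z).
set A := [set z | e v z && e z a]; set B := [set z | e v z && e z b].
set f2 := fun p : T * T => v |: [set p.1; p.2].
set fa := fun y => v |: [set a; y].
set fb := fun y => v |: [set b; y].
have sub : [set D | gamma_t_set e D & v \in D] \subset
           ((f2 @: setX A B) :|: (fa @: A)) :|: (fb @: B).
  apply/subsetP=> D; rewrite !inE /gamma_t_set g => /andP[/andP[tD /eqP cD] vD].
  have c2 : #|D :\ v| = 2 by move: cD; rewrite (cardsD1 v) vD add1n => -[].
  have DE : D = v |: (D :\ v) by rewrite setD1K.
  have inS : forall z, z \in D -> z != v -> z \in D :\ v.
    by move=> z zD zv; rewrite !inE zv.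
  move/tdP: tD => H.
  case: (H v) => pv pvD vpv; have pvv : pv != v by rewrite eq_sym (ne_of_e ir vpv).
  have pvS := inS _ pvD pvv.
  case: (H a) => pa paD apa.
  have pav : pa != v by apply: contraNneq va => E; rewrite sy -E.
  have paS := inS _ paD pav.
  case: (H b) => pb pbD bpb.
  have pbv : pb != v by apply: contraNneq vb => E; rewrite sy -E.
  have pbS := inS _ pbD pbv.
  case aD: (a \in D); case bD: (b \in D).
  - have aS := inS _ aD (s_av S); have bS := inS _ bD (s_bv S).
    move: pvS; rewrite (two_eq c2 aS bS (s_ab S)) !inE.
    by case/orP=> /eqP E; [move: va | move: vb]; rewrite -E vpv.
  - have aS := inS _ aD (s_av S).
    have apv : a != pv by rewrite eq_sym (ne_of_e2 vpv va).
    have SE := two_eq c2 aS pvS apv.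
    move: paS; rewrite SE !inE => /orP[]/eqP E; first by move: apa; rewrite E ir.
    rewrite -E in vpv.
    apply/orP; left; apply/orP; right; apply/imsetP; exists pa.
      by rewrite !inE vpv sy.
    by rewrite DE SE E.
  - have bS := inS _ bD (s_bv S).
    have bpv : b != pv by rewrite eq_sym (ne_of_e2 vpv vb).
    have SE := two_eq c2 bS pvS bpv.
    move: pbS; rewrite SE !inE => /orP[]/eqP E; first by move: bpb; rewrite E ir.
    rewrite -E in vpv.
    apply/orP; right; apply/imsetP; exists pb.
      by rewrite !inE vpv sy.
    by rewrite DE SE E.
  - have Npa : e v pa.
      case: (s_cls S pa) => [E|E|E|//]; first by rewrite E eqxx in pav.
        by rewrite -E paD in aD.
      by rewrite -E paD in bD.
    have Npb : e v pb.
      case: (s_cls S pb) => [E|E|E|//]; first by rewrite E eqxx in pbv.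
        by rewrite -E pbD in aD.
      by rewrite -E pbD in bD.
    have papb : pa != pb.
      apply/negP=> /eqP E; apply: (dis pa Npa); first by rewrite sy.
      by rewrite E sy.
    have SE := two_eq c2 paS pbS papb.
    apply/orP; left; apply/orP; left; apply/imsetP; exists (pa, pb).
      by rewrite !inE /= Npa Npb !(sy _ a) !(sy _ b) apa bpb.
    by rewrite DE SE.
have cAB : #|A| + #|B| <= k.
  have AB0 : A :&: B = set0.
    apply/setP=> z; rewrite !inE; apply/negP=> /andP[]/andP[vz za]/andP[_ zb].
    exact: dis vz za zb.
  rewrite -Nk; have := cardsU A B; rewrite AB0 cards0 subn0 => <-.
  apply: subset_leq_card; apply/subsetP=> z; rewrite !inE.
  by case/orP=> /andP[].
apply: arith4 (cAB) k2; rewrite /TDV.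
apply: leq_trans (subset_leq_card sub) _.
apply: leq_trans (leq_card_setU _ _).1 _.
apply: leq_add; last exact: leq_imset_card.
apply: leq_trans (leq_card_setU _ _).1 _.
apply: leq_add; last exact: leq_imset_card.
by rewrite -cardsX; exact: leq_imset_card.
Qed.


Theorem theorem2p17 (T : finType) (e : rel T) (v : T) :
  simple_graph e ->
  4 <= #|T| ->
  no_isolated e ->
  max_deg e = #|T| - 3 ->
  deg e v = max_deg e ->
  (~ connected_graph e -> gamma_t e = 4 /\ TDV e v = #|T| - 3) /\
  (connected_graph e ->
     (gamma_t e = 2 /\ TDV e v <= #|T| - 3) \/
     (gamma_t e = 3 /\ 4 * TDV e v <= (#|T| - 3) ^ 2 + 8 * (#|T| - 4))).
Proof.
move=> [sy ir] n4 iso md dv.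
set k := #|T| - 3.
have Nk : #|nbhd e v| = k by rewrite /k -md -dv.
have dk : forall u, deg e u <= k by move=> u; rewrite /k -md /max_deg; exact: (leq_bigmax u).
have cC : #|~: nbhd e v| = 3 by have := cardsC (nbhd e v); rewrite Nk /k; lia.
have vC : v \in ~: nbhd e v by rewrite !inE ir.
have cR : #|~: nbhd e v :\ v| == 2 by move: cC; rewrite (cardsD1 v) vC add1n => -[->].
case/cards2P: cR => a [b [ab RE]].
have aR : a \in ~: nbhd e v :\ v by rewrite RE !inE eqxx.
have bR : b \in ~: nbhd e v :\ v by rewrite RE !inE eqxx orbT.
move: aR bR; rewrite !inE => /andP[av va] /andP[bv vb].
have S : Setup e v a b.
  constructor=> //.
    move=> x; case: (eqVneq x v) => [->|xv]; first exact: Or41.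
    case vx: (e v x); first exact: Or44.
    have : x \in ~: nbhd e v :\ v by rewrite !inE xv vx.
    by rewrite RE !inE => /orP[]/eqP ->; [exact: Or42 | exact: Or43].
  move=> x; have := iso x; rewrite /deg card_gt0 => /set0Pn[y]; rewrite inE.
  by exists y.
split.
  by move=> nc; have [-> ->] := disc_case S nc; rewrite Nk.
move=> con; have := con_case S con Nk dk.
by have -> : #|T| - 4 = k - 1 by rewrite /k; lia.
Qed.
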